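(* Let $A$ be a non-symmetric haploid commutative $\Delta$-separable special Frobenius algebra in $\mathcal{C}$, with Nakayama automorphism $N_A$. Then $\mu\circ(N_A\otimes\mathrm{id}_A)\circ\Delta=0$.
   Context: Standing assumptions: $k$ is a field with $\mathrm{char}(k)\neq 2$. $\mathcal{C}$ is a $k$-linear additive idempotent-complete ribbon category, strict as a monoidal category, with bilinear tensor product and absolutely simple tensor unit ($\mathrm{End}_{\mathcal{C}}(1)=k\,\mathrm{id}_1$), with braiding $c$ and twist $\theta$. A Frobenius algebra $(A,\mu,\eta,\Delta,\epsilon)$ is an algebra and coalgebra with $(\mathrm{id}\otimes\mu)(\Delta\otimes\mathrm{id})=\Delta\mu=(\mu\otimes\mathrm{id})(\mathrm{id}\otimes\Delta)$. It is commutative if $\mu\circ c_{A,A}=\mu$; $\Delta$-separable if $\mu\circ\Delta=\mathrm{id}_A$; special if $\epsilon\circ\eta\in k^\times\mathrm{id}_1$ and $\mu\circ\Delta\in k^\times\mathrm{id}_A$; haploid if $\dim_k\mathrm{Hom}(1,A)=1$. The Nakayama automorphism is $N_A=\Phi_1^{-1}\circ\Phi_2$, where with $\kappa=\epsilon\circ\mu$, $\Phi_1=(\kappa\otimes\mathrm{id}_{A^*})(\mathrm{id}_A\otimes\mathrm{coev}_A)$ and $\Phi_2=(\mathrm{id}_{A^*}\otimes\kappa)(\widetilde{\mathrm{coev}}_A\otimes\mathrm{id}_A)$ are the isomorphisms $A\to A^*$ given by the Frobenius pairing and the two coevaluations of the pivotal structure; $A$ is symmetric if $N_A=\mathrm{id}_A$.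 *)

(* Defs.v *)
From HB Require Import structures.
From mathcomp Require Import all_boot all_order all_algebra.
Set Implicit Arguments. Unset Strict Implicit. Unset Printing Implicit Defensive.
Import GRing.Theory.
Local Open Scope ring_scope.

(* Data of a k-linear strict monoidal braided category with duals     *)
(* (left duality ev/coev, right duality tev/tcoev on the same dual    *)
(* object) and twist.  Strictness: the associativity and unit         *)
(* constraints are EQUALITIES of objects; morphisms are transported   *)
(* along them by [cast].                                              *)
Record ribbon_data (k : fieldType) := RibbonData {
  Ob : Type;
  Mor : Ob -> Ob -> lmodType k;
  comp : forall a b c : Ob, Mor b c -> Mor a b -> Mor a c;
  idm : forall a : Ob, Mor a a;
  otens : Ob -> Ob -> Ob;
  tunit : Ob;
  tensm : forall a b c d : Ob, Mor a b -> Mor c d -> Mor (otens a c) (otens b d);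
  tensA : forall a b c : Ob, otens (otens a b) c = otens a (otens b c);
  tens1l : forall a : Ob, otens tunit a = a;
  tens1r : forall a : Ob, otens a tunit = a;
  braid : forall a b : Ob, Mor (otens a b) (otens b a);
  twist : forall a : Ob, Mor a a;
  dual : Ob -> Ob;
  ev : forall a : Ob, Mor (otens (dual a) a) tunit;
  coev : forall a : Ob, Mor tunit (otens a (dual a));
  tev : forall a : Ob, Mor (otens a (dual a)) tunit;
  tcoev : forall a : Ob, Mor tunit (otens (dual a) a)
}.

Section RibbonDefs.
Variable k : fieldType.
Variable C : ribbon_data k.

Local Notation Ob := (Ob C).
Local Notation Mor := (@Mor k C).
Local Notation "f ◦ g" := (comp f g) (at level 40, left associativity).
Local Notation "f ⊗ g" := (tensm f g) (at level 35, right associativity).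
Local Notation "a ⊠ b" := (otens a b) (at level 35, right associativity).
Local Notation id := (@idm k C).
Local Notation tunit := (tunit C).
Local Notation twist := (@twist k C).
Local Notation braid := (@braid k C).
Local Notation dual := (@dual k C).
Local Notation ev := (@ev k C).
Local Notation coev := (@coev k C).
Local Notation tev := (@tev k C).
Local Notation tcoev := (@tcoev k C).
Local Notation otens := (@otens k C).
Local Notation tensA := (@tensA k C).
Local Notation tens1l := (@tens1l k C).
Local Notation tens1r := (@tens1r k C).
Local Notation comp := (@comp k C).
Local Notation tensm := (@tensm k C).

Definition cast (a b : Ob) (e : a = b) : Mor a b :=
  eq_rect a (fun x => Mor a x) (id a) b e.

Definition ldualm (a b : Ob) (f : Mor a b) : Mor (dual b) (dual a) :=
  cast (tens1l (dual a))
  ◦ (ev b ⊗ id (dual a))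
  ◦ ((id (dual b) ⊗ f) ⊗ id (dual a))
  ◦ cast (esym (tensA (dual b) a (dual a)))
  ◦ (id (dual b) ⊗ coev a)
  ◦ cast (esym (tens1r (dual b))).

Definition rdualm (a b : Ob) (f : Mor a b) : Mor (dual b) (dual a) :=
  cast (tens1r (dual a))
  ◦ (id (dual a) ⊗ tev b)
  ◦ (id (dual a) ⊗ (f ⊗ id (dual b)))
  ◦ cast (tensA (dual a) a (dual b))
  ◦ (tcoev a ⊗ id (dual b))
  ◦ cast (esym (tens1l (dual b))).

Definition is_iso (a b : Ob) (f : Mor a b) : Prop :=
  exists g : Mor b a, g ◦ f = id a /\ f ◦ g = id b.

Record ribbon_axioms : Prop := RibbonAxioms {
  compA : forall a b c d (f : Mor c d) (g : Mor b c) (h : Mor a b),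
      f ◦ (g ◦ h) = (f ◦ g) ◦ h;
  comp1l : forall a b (f : Mor a b), id b ◦ f = f;
  comp1r : forall a b (f : Mor a b), f ◦ id a = f;
  comp_linl : forall a b c (r : k) (f g : Mor b c) (h : Mor a b),
      (r *: f + g) ◦ h = r *: (f ◦ h) + g ◦ h;
  comp_linr : forall a b c (r : k) (f : Mor b c) (g h : Mor a b),
      f ◦ (r *: g + h) = r *: (f ◦ g) + f ◦ h;
  zero_obj : exists z : Ob, id z = 0;
  biprod : forall a b : Ob, exists (s : Ob) (i1 : Mor a s) (i2 : Mor b s)
      (p1 : Mor s a) (p2 : Mor s b),
      [/\ p1 ◦ i1 = id a, p2 ◦ i2 = id b, p1 ◦ i2 = 0, p2 ◦ i1 = 0
        & i1 ◦ p1 + i2 ◦ p2 = id s];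
  idem_split : forall a (e : Mor a a), e ◦ e = e ->
      exists (b : Ob) (r : Mor a b) (s : Mor b a), r ◦ s = id b /\ s ◦ r = e;
  tens_linl : forall a b c d (r : k) (f g : Mor a b) (h : Mor c d),
      (r *: f + g) ⊗ h = r *: (f ⊗ h) + g ⊗ h;
  tens_linr : forall a b c d (r : k) (f : Mor a b) (g h : Mor c d),
      f ⊗ (r *: g + h) = r *: (f ⊗ g) + f ⊗ h;
  tens_comp : forall a1 b1 c1 a2 b2 c2 (f1 : Mor b1 c1) (g1 : Mor a1 b1)
      (f2 : Mor b2 c2) (g2 : Mor a2 b2),
      (f1 ◦ g1) ⊗ (f2 ◦ g2) = (f1 ⊗ f2) ◦ (g1 ⊗ g2);
  tens_id : forall a b, id a ⊗ id b = id (a ⊠ b);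
  tensA_nat : forall a b c d e f (x : Mor a b) (y : Mor c d) (z : Mor e f),
      cast (tensA b d f) ◦ ((x ⊗ y) ⊗ z) = (x ⊗ (y ⊗ z)) ◦ cast (tensA a c e);
  tens1l_nat : forall a b (x : Mor a b),
      cast (tens1l b) ◦ (id tunit ⊗ x) = x ◦ cast (tens1l a);
  tens1r_nat : forall a b (x : Mor a b),
      cast (tens1r b) ◦ (x ⊗ id tunit) = x ◦ cast (tens1r a);
  end_one : forall f : Mor tunit tunit, exists r : k, f = r *: id tunit;
  id_one_neq0 : id tunit != 0;
  braid_nat : forall a b c d (f : Mor a b) (g : Mor c d),
      braid b d ◦ (f ⊗ g) = (g ⊗ f) ◦ braid a c;
  braid_iso : forall a b, is_iso (braid a b);
  hexagon1 : forall a b c,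
      braid a (b ⊠ c) =
        cast (esym (tensA b c a)) ◦ (id b ⊗ braid a c) ◦ cast (tensA b a c)
        ◦ (braid a b ⊗ id c) ◦ cast (esym (tensA a b c));
  hexagon2 : forall a b c,
      braid (a ⊠ b) c =
        cast (tensA c a b) ◦ (braid a c ⊗ id b) ◦ cast (esym (tensA a c b))
        ◦ (id a ⊗ braid b c) ◦ cast (tensA a b c);
  zigzag_l1 : forall a,
      cast (tens1r a) ◦ (id a ⊗ ev a) ◦ cast (tensA a (dual a) a)
      ◦ (coev a ⊗ id a) ◦ cast (esym (tens1l a)) = id a;
  zigzag_l2 : forall a,
      cast (tens1l (dual a)) ◦ (ev a ⊗ id (dual a))
      ◦ cast (esym (tensA (dual a) a (dual a)))
      ◦ (id (dual a) ⊗ coev a) ◦ cast (esym (tens1r (dual a))) = id (dual a);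
  zigzag_r1 : forall a,
      cast (tens1l a) ◦ (tev a ⊗ id a) ◦ cast (esym (tensA a (dual a) a))
      ◦ (id a ⊗ tcoev a) ◦ cast (esym (tens1r a)) = id a;
  zigzag_r2 : forall a,
      cast (tens1r (dual a)) ◦ (id (dual a) ⊗ tev a)
      ◦ cast (tensA (dual a) a (dual a))
      ◦ (tcoev a ⊗ id (dual a)) ◦ cast (esym (tens1l (dual a))) = id (dual a);
  sovereign : forall a b (f : Mor a b), ldualm f = rdualm f;
  twist_nat : forall a b (f : Mor a b), twist b ◦ f = f ◦ twist a;
  twist_iso : forall a, is_iso (twist a);
  twist_tens : forall a b,
      twist (a ⊠ b) = braid b a ◦ braid a b ◦ (twist a ⊗ twist b);
  twist_dual : forall a, twist (dual a) = ldualm (twist a);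
  tev_ribbon : forall a, tev a = ev a ◦ braid a (dual a) ◦ (twist a ⊗ id (dual a));
  tcoev_ribbon : forall a,
      tcoev a = (id (dual a) ⊗ twist a) ◦ braid a (dual a) ◦ coev a
}.

Section Frobenius.
Variables (A : Ob) (mu : Mor (A ⊠ A) A) (eta : Mor tunit A)
          (delta : Mor A (A ⊠ A)) (eps : Mor A tunit).

Definition algebra_axioms : Prop :=
  [/\ mu ◦ (mu ⊗ id A) = mu ◦ (id A ⊗ mu) ◦ cast (tensA A A A),
      mu ◦ (eta ⊗ id A) = cast (tens1l A)
    & mu ◦ (id A ⊗ eta) = cast (tens1r A)].

Definition coalgebra_axioms : Prop :=
  [/\ cast (tensA A A A) ◦ (delta ⊗ id A) ◦ delta = (id A ⊗ delta) ◦ delta,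
      (eps ⊗ id A) ◦ delta = cast (esym (tens1l A))
    & (id A ⊗ eps) ◦ delta = cast (esym (tens1r A))].

Definition frobenius_relations : Prop :=
  (id A ⊗ mu) ◦ cast (tensA A A A) ◦ (delta ⊗ id A) = delta ◦ mu /\
  delta ◦ mu = (mu ⊗ id A) ◦ cast (esym (tensA A A A)) ◦ (id A ⊗ delta).

Definition frobenius_algebra : Prop :=
  [/\ algebra_axioms, coalgebra_axioms & frobenius_relations].

Definition commutative_alg : Prop := mu ◦ braid A A = mu.

Definition delta_separable : Prop := mu ◦ delta = id A.

Definition special : Prop :=
  (exists2 r : k, r != 0 & eps ◦ eta = r *: id tunit) /\
  (exists2 s : k, s != 0 & mu ◦ delta = s *: id A).

(* dim_k Mor(1, A) = 1 *)
Definition haploid : Prop :=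
  exists2 f : Mor tunit A, f != 0 & forall g : Mor tunit A, exists r : k, g = r *: f.

Definition kappa : Mor (A ⊠ A) tunit := eps ◦ mu.

Definition Phi1 : Mor A (dual A) :=
  cast (tens1l (dual A)) ◦ (kappa ⊗ id (dual A))
  ◦ cast (esym (tensA A A (dual A))) ◦ (id A ⊗ coev A) ◦ cast (esym (tens1r A)).

Definition Phi2 : Mor A (dual A) :=
  cast (tens1r (dual A)) ◦ (id (dual A) ⊗ kappa)
  ◦ cast (tensA (dual A) A A) ◦ (tcoev A ⊗ id A) ◦ cast (esym (tens1l A)).

(* N is the Nakayama automorphism N_A = Phi1^{-1} o Phi2, i.e. the
   (unique, Phi1 being invertible) morphism with Phi1 o N = Phi2. *)
Definition is_nakayama (N : Mor A A) : Prop := Phi1 ◦ N = Phi2.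

End Frobenius.
End RibbonDefs.

Notation "f ◦ g" := (comp f g) (at level 40, left associativity).
Notation "f ⊗ g" := (tensm f g) (at level 35, right associativity).

(* Main.v *)
Require Import Defs.
From HB Require Import structures.
From mathcomp Require Import all_boot all_order all_algebra.
From Stdlib Require Import ProofIrrelevance.
Import GRing.Theory.
Local Open Scope ring_scope.
Set Implicit Arguments. Unset Strict Implicit.

Section P.
Variable k : fieldType.
Variable C : ribbon_data k.
Hypothesis HC : ribbon_axioms C.
Local Notation Ob := (Ob C).
Local Notation Mor := (@Mor k C).
Local Notation id := (@idm k C).
Local Notation I := (tunit C).
Local Notation "a ⊠ b" := (@otens k C a b) (at level 35, right associativity).

Definition cA := Defs.compA HC.
Definition c1l := Defs.comp1l HC.
Definition c1r := Defs.comp1r HC.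
Definition tC := Defs.tens_comp HC.
Definition tI := Defs.tens_id HC.

Lemma cast_irr (a b : Ob) (e1 e2 : a = b) : cast e1 = cast e2.
Proof. by rewrite (proof_irrelevance _ e1 e2). Qed.

Lemma cast_refl (a : Ob) (e : a = a) : cast e = id a.
Proof. by rewrite (proof_irrelevance _ e erefl). Qed.

Lemma cast_comp (a b c : Ob) (e1 : b = c) (e2 : a = b) :
  cast e1 ◦ cast e2 = cast (etrans e2 e1).
Proof. destruct e1; rewrite [cast erefl]/cast /=. exact: c1l. Qed.

Lemma cast_compr (a b c d : Ob) (e1 : b = c) (e2 : a = b) (h : Mor d a) :
  cast e1 ◦ (cast e2 ◦ h) = cast (etrans e2 e1) ◦ h.
Proof. by rewrite cA cast_comp. Qed.

Lemma cast_tens (a b c d : Ob) (e1 : a = b) (e2 : c = d) (e : a ⊠ c = b ⊠ d) :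
  cast e1 ⊗ cast e2 = cast e.
Proof. destruct e1, e2. rewrite !cast_refl. exact: tI. Qed.

Lemma id_cast (a : Ob) : id a = cast (erefl a).
Proof. by []. Qed.
Definition t1l := Defs.tens1l_nat HC.
Definition t1r := Defs.tens1r_nat HC.
Definition tAn := Defs.tensA_nat HC.

Lemma tcomp_l (a b c d : Ob) (f : Mor b c) (g : Mor a b) :
  (f ◦ g) ⊗ id d = (f ⊗ id d) ◦ (g ⊗ id d).
Proof. by rewrite -tC c1l. Qed.
Lemma tcomp_r (a b c d : Ob) (f : Mor b c) (g : Mor a b) :
  id d ⊗ (f ◦ g) = (id d ⊗ f) ◦ (id d ⊗ g).
Proof. by rewrite -tC c1l. Qed.
Lemma xchg1 (a b c d : Ob) (f : Mor a b) (g : Mor c d) :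
  f ⊗ g = (f ⊗ id d) ◦ (id a ⊗ g).
Proof. by rewrite -tC c1l c1r. Qed.
Lemma xchg2 (a b c d : Ob) (f : Mor a b) (g : Mor c d) :
  f ⊗ g = (id b ⊗ g) ◦ (f ⊗ id c).
Proof. by rewrite -tC c1l c1r. Qed.

Lemma cast_tensl (a b c : Ob) (e : a = b) :
  cast e ⊗ id c = cast (congr1 (fun z => z ⊠ c) e).
Proof. destruct e; rewrite !cast_refl; exact: tI. Qed.
Lemma cast_tensr (a b c : Ob) (e : a = b) :
  id c ⊗ cast e = cast (congr1 (fun z => c ⊠ z) e).
Proof. destruct e; rewrite !cast_refl; exact: tI. Qed.

Lemma rw2 (a b c d : Ob) (f : Mor b c) (g : Mor a b) (u : Mor a c) (h : Mor d a) :
  f ◦ g = u -> f ◦ (g ◦ h) = u ◦ h.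
Proof. by move=> <-; rewrite cA. Qed.
Lemma rw3 (a b c e d : Ob) (f : Mor b c) (g : Mor e b) (g' : Mor a e) (u : Mor a c) (h : Mor d a) :
  f ◦ g ◦ g' = u -> f ◦ (g ◦ (g' ◦ h)) = u ◦ h.
Proof. by move=> <-; rewrite !cA. Qed.

Ltac nf := rewrite -?cA.
Ltac cmerge := nf; rewrite ?cast_tensl ?cast_tensr ?cast_compr ?cast_comp.
Ltac cdone := solve [ repeat (first [ reflexivity | apply: cast_irr | congr (_ ◦ _) ]) ].
Lemma tAn' (a b c d e f : Ob) (x : Mor a b) (y : Mor c d) (z : Mor e f) :
  (x ⊗ y) ⊗ z = cast (esym (tensA b d f)) ◦ (x ⊗ (y ⊗ z)) ◦ cast (tensA a c e).
Proof. by rewrite -cA -tAn cA cast_comp cast_refl c1l. Qed.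
Lemma tAn'' (a b c d e f : Ob) (x : Mor a b) (y : Mor c d) (z : Mor e f) :
  x ⊗ (y ⊗ z) = cast (tensA b d f) ◦ ((x ⊗ y) ⊗ z) ◦ cast (esym (tensA a c e)).
Proof. by rewrite tAn -cA cast_comp cast_refl c1r. Qed.
Lemma ev_transpose (a x : Ob) (g : Mor (x ⊠ a) I) :
  ev a ◦ ((cast (tens1l (dual a)) ◦ (g ⊗ id (dual a))
     ◦ cast (esym (tensA x a (dual a))) ◦ (id x ⊗ coev a) ◦ cast (esym (tens1r x))) ⊗ id a) = g.
Proof.
rewrite !tcomp_l cast_tensl; nf.
have -> : cast (congr1 (fun z => z ⊠ a) (tens1l (dual a))) = cast (tens1l (dual a ⊠ a)) ◦ cast (tensA I (dual a) a).
  by rewrite cast_comp; apply: cast_irr.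
nf; rewrite (rw2 _ (esym (t1l _))). 
rewrite (rw2 _ (tAn _ _ _)) tI. nf.
rewrite (rw2 _ (esym (xchg2 _ _))) xchg1.
rewrite (cast_irr (tens1l I) (tens1r I)).
nf; rewrite (rw2 _ (t1r _)) -cA.
rewrite -[RHS]c1r; congr (_ ◦ _).
rewrite -tI (tAn' (id x) (id a) (ev a)) (tAn' (id x) (coev a) (id a)).
rewrite -[X in _ = _ ⊗ X](zigzag_l1 HC a) !tcomp_r.
cmerge. cdone.
Qed.
Lemma tAnr (a b c d e f : Ob) (x : Mor a b) (y : Mor c d) (z : Mor e f) :
  cast (esym (tensA b d f)) ◦ (x ⊗ (y ⊗ z)) = ((x ⊗ y) ⊗ z) ◦ cast (esym (tensA a c e)).
Proof. by rewrite tAn' -!cA cast_comp cast_refl c1r. Qed.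
Lemma tev_transpose (a x : Ob) (g : Mor (a ⊠ x) I) :
  tev a ◦ (id a ⊗ (cast (tens1r (dual a)) ◦ (id (dual a) ⊗ g)
     ◦ cast (tensA (dual a) a x) ◦ (tcoev a ⊗ id x) ◦ cast (esym (tens1l x)))) = g.
Proof.
rewrite !tcomp_r cast_tensr; nf.
have -> : cast (congr1 (fun z => a ⊠ z) (tens1r (dual a))) = cast (tens1r (a ⊠ dual a)) ◦ cast (esym (tensA a (dual a) I)).
  by rewrite cast_comp; apply: cast_irr.
nf; rewrite (rw2 _ (esym (t1r _))). 
rewrite (rw2 _ (tAnr _ _ _)) tI. nf.
rewrite (rw2 _ (esym (xchg1 _ _))) xchg2.
rewrite (cast_irr (tens1r I) (tens1l I)).
nf; rewrite (rw2 _ (t1l _)) -cA.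
rewrite -[RHS]c1r; congr (_ ◦ _).
rewrite -tI (tAn'' (tev a) (id a) (id x)) (tAn'' (id a) (tcoev a) (id x)).
rewrite -[X in _ = X ⊗ _](zigzag_r1 HC a) !tcomp_l.
cmerge. cdone.
Qed.
Lemma t1r' (a b : Ob) (x : Mor a b) :
  cast (esym (tens1r b)) ◦ x = (x ⊗ id I) ◦ cast (esym (tens1r a)).
Proof.
rewrite -[RHS]c1l -(cast_refl (etrans (tens1r b) (esym (tens1r b)))) -cast_comp.
by rewrite -!cA (cA _ (x ⊗ _)) t1r -!cA cast_comp cast_refl c1r.
Qed.
Lemma t1l' (a b : Ob) (x : Mor a b) :
  cast (esym (tens1l b)) ◦ x = (id I ⊗ x) ◦ cast (esym (tens1l a)).
Proof.
rewrite -[RHS]c1l -(cast_refl (etrans (tens1l b) (esym (tens1l b)))) -cast_comp.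
by rewrite -!cA (cA _ (_ ⊗ x)) t1l -!cA cast_comp cast_refl c1r.
Qed.
Lemma dbl0 (V : zmodType) (x : V) : x = x + x -> x = 0.
Proof. by move=> E; apply: (addrI x); rewrite addr0 -E. Qed.
Lemma comp0l (a b c : Ob) (h : Mor a b) : (0 : Mor b c) ◦ h = 0.
Proof.
have := Defs.comp_linl HC 1 (0 : Mor b c) 0 h.
by rewrite !scale1r addr0; apply: dbl0.
Qed.
Lemma comp0r (a b c : Ob) (f : Mor b c) : f ◦ (0 : Mor a b) = 0.
Proof.
have := Defs.comp_linr HC 1 f (0 : Mor a b) 0.
by rewrite !scale1r addr0; apply: dbl0.
Qed.
Lemma compZl (a b c : Ob) r (f : Mor b c) (h : Mor a b) : (r *: f) ◦ h = r *: (f ◦ h).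
Proof. by have := Defs.comp_linl HC r f 0 h; rewrite !addr0 comp0l addr0. Qed.
Lemma compZr (a b c : Ob) r (f : Mor b c) (h : Mor a b) : f ◦ (r *: h) = r *: (f ◦ h).
Proof. by have := Defs.comp_linr HC r f h 0; rewrite !addr0 comp0r addr0. Qed.
Lemma tens0l (a b c d : Ob) (h : Mor c d) : (0 : Mor a b) ⊗ h = 0.
Proof.
have := Defs.tens_linl HC 1 (0 : Mor a b) 0 h.
by rewrite !scale1r addr0; apply: dbl0.
Qed.
Lemma tensZl (a b c d : Ob) r (f : Mor a b) (h : Mor c d) : (r *: f) ⊗ h = r *: (f ⊗ h).
Proof. by have := Defs.tens_linl HC r f 0 h; rewrite !addr0 tens0l addr0. Qed.
Lemma tens0r (a b c d : Ob) (h : Mor a b) : h ⊗ (0 : Mor c d) = 0.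
Proof.
have := Defs.tens_linr HC 1 h (0 : Mor c d) 0.
by rewrite !scale1r addr0; apply: dbl0.
Qed.
Lemma tensZr (a b c d : Ob) r (f : Mor a b) (h : Mor c d) : f ⊗ (r *: h) = r *: (f ⊗ h).
Proof. by have := Defs.tens_linr HC r f h 0; rewrite !addr0 tens0r addr0. Qed.
Section Frob.
Variables (A : Ob) (mu : Mor (A ⊠ A) A) (eta : Mor I A)
          (delta : Mor A (A ⊠ A)) (eps : Mor A I).
Hypothesis HF : frobenius_algebra mu eta delta eps.
Local Notation kap := (kappa mu eps).

Lemma recon : cast (tens1l A) ◦ (kap ⊗ id A) ◦ cast (esym (tensA A A A))
   ◦ (id A ⊗ (delta ◦ eta)) ◦ cast (esym (tens1r A)) = id A.
Proof.
case: HF => [[_ _ u1] [_ c1 _] [_ f2]].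
rewrite /kappa tcomp_l tcomp_r; nf.
rewrite (rw3 _ (esym f2)); nf.
rewrite (rw2 _ u1) (rw2 _ c1); cmerge.
exact: cast_refl.
Qed.

Lemma slide_gen (X : Ob) (K : Mor (A ⊠ A) I) (D : Mor I (A ⊠ A)) (f : Mor X A) :
  (cast (tens1l A) ◦ (K ⊗ id A) ◦ cast (esym (tensA A A A))
   ◦ (id A ⊗ D) ◦ cast (esym (tens1r A))) ◦ f =
  cast (tens1l A) ◦ ((K ◦ (f ⊗ id A)) ⊗ id A)
   ◦ cast (esym (tensA X A A)) ◦ (id X ⊗ D) ◦ cast (esym (tens1r X)).
Proof.
nf. rewrite t1r' (rw2 _ (esym (xchg2 _ _))) (xchg1 f D) -[id (A ⊠ A)]tI; nf.
rewrite (rw2 _ (tAnr _ _ _)); nf; rewrite (rw2 _ (esym (tcomp_l _ _ _))); nf; done.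
Qed.

Lemma nondeg (X : Ob) (g h : Mor X A) :
  kap ◦ (g ⊗ id A) = kap ◦ (h ⊗ id A) -> g = h.
Proof.
have key : forall g : Mor X A, g = cast (tens1l A) ◦ ((kap ◦ (g ⊗ id A)) ⊗ id A)
   ◦ cast (esym (tensA X A A)) ◦ (id X ⊗ (delta ◦ eta)) ◦ cast (esym (tens1r X)).
  by move=> f; rewrite -slide_gen recon c1l.
by move=> E; rewrite (key g) (key h) E.
Qed.
Hypothesis Hcomm : commutative_alg mu.

Lemma kap_ci (ci : Mor (A ⊠ A) (A ⊠ A)) : braid A A ◦ ci = id _ -> kap ◦ ci = kap.
Proof. by move=> h; rewrite /kappa -{1}Hcomm -!cA h c1r. Qed.

Lemma ev_Phi2 (ti : Mor A A) : twist A ◦ ti = id A ->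
  ev A ◦ (Phi2 mu eps ⊗ id A) = kap ◦ (id A ⊗ ti).
Proof.
move=> tti.
have [ci' [h1 h2]] := Defs.braid_iso HC A (dual A).
have [ci [g1 g2]] := Defs.braid_iso HC A A.
have Sa : ev A = tev A ◦ (ti ⊗ id _) ◦ ci'.
  rewrite (Defs.tev_ribbon HC) -!cA (cA (_ ⊗ _)) -tcomp_l tti tI c1l.
  by rewrite h2 c1r.
have Sb : ci' ◦ (Phi2 mu eps ⊗ id A) = (id A ⊗ Phi2 mu eps) ◦ ci.
  rewrite -[LHS]c1r -g2 !cA -(cA ci') -(Defs.braid_nat HC) cA h1 c1l //.
have Sc : (ti ⊗ id A) ◦ ci = ci ◦ (id A ⊗ ti).
  rewrite -[LHS]c1l -g1 -!cA (cA (braid _ _)) (Defs.braid_nat HC) -!cA g2 c1r //.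
rewrite Sa -!cA Sb (cA (ti ⊗ _)) -xchg1 xchg2 !cA.
rewrite /Phi2 tev_transpose -cA Sc cA kap_ci //.
Qed.
Lemma theta_mult : twist A ◦ mu = mu ◦ (twist A ⊗ twist A).
Proof.
rewrite (Defs.twist_nat HC) (Defs.twist_tens HC).
by rewrite !cA Hcomm Hcomm.
Qed.

Lemma kap_tt (t : k) : twist I = t *: id I -> kap ◦ (twist A ⊗ twist A) = t *: kap.
Proof.
move=> Ht; rewrite /kappa -cA -theta_mult cA -(Defs.twist_nat HC) Ht.
by rewrite compZl c1l compZl.
Qed.

Lemma ev_Phi1 : ev A ◦ (Phi1 mu eps ⊗ id A) = kap.
Proof. exact: ev_transpose. Qed.

Lemma N_eq (t : k) (N : Mor A A) : twist I = t *: id I -> t != 0 ->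
  is_nakayama mu eps N -> N = t^-1 *: twist A.
Proof.
move=> Ht t0 HN.
have [ti [ti1 ti2]] := Defs.twist_iso HC A.
apply: nondeg.
rewrite -[X in X ◦ (N ⊗ _) = _]ev_Phi1 -cA -tcomp_l HN (ev_Phi2 ti2).
rewrite tensZl compZr.
have -> : twist A ⊗ id A = (twist A ⊗ twist A) ◦ (id A ⊗ ti).
  by rewrite -tC c1r ti2.
by rewrite cA (kap_tt Ht) compZl scalerA mulVf // scale1r.
Qed.
Lemma F1 : (mu ◦ ((twist A ⊗ id A) ◦ delta)) ◦ mu
   = mu ◦ ((mu ◦ ((twist A ⊗ id A) ◦ delta)) ⊗ id A).
Proof.
case: HF => [[a1 _ _] _ [f1 _]].
rewrite !tcomp_l; nf. rewrite -f1; nf.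
rewrite (rw2 _ (esym (xchg1 _ _))) (xchg2 (twist A) mu) -[id (A ⊠ A)]tI; nf.
rewrite (rw2 _ (esym (tAn _ _ _))); nf.
by rewrite (rw3 _ (esym a1)); nf.
Qed.

Lemma F4 : (mu ◦ ((twist A ⊗ id A) ◦ delta)) ◦ mu
   = mu ◦ (twist A ⊗ (mu ◦ ((twist A ⊗ id A) ◦ delta))).
Proof.
case: HF => [[a1 _ _] _ [_ f2]].
nf. rewrite f2; nf.
rewrite (rw2 _ (esym (tcomp_l _ _ _))) theta_mult tcomp_l; nf.
rewrite (rw2 _ a1); nf. rewrite (rw2 _ (tAn _ _ _)); nf.
rewrite cast_compr cast_refl c1l.
rewrite (rw2 _ (esym (tC _ _ _ _))) c1l (esym (tC _ _ _ _)) c1r.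
by rewrite -cA.
Qed.

Lemma F2abs (f : Mor A A) (c : k) : f ◦ mu = mu ◦ (f ⊗ id A) -> f ◦ eta = c *: eta ->
  f = c *: id A.
Proof.
case: HF => [[_ u2 _] _ _] E1 E2.
have U : mu ◦ (eta ⊗ id A) ◦ cast (esym (tens1l A)) = id A.
  by rewrite u2 cast_comp cast_refl.
rewrite -[LHS]c1r -{1}U !cA E1 -(cA mu) -tcomp_l E2 tensZl compZr compZl U //.
Qed.

Lemma F5abs (f : Mor A A) (c : k) : f ◦ mu = mu ◦ (twist A ⊗ f) -> f ◦ eta = c *: eta ->
  f = c *: twist A.
Proof.
case: HF => [[_ _ u3] _ _] E1 E2.
have U : mu ◦ (id A ⊗ eta) ◦ cast (esym (tens1r A)) = id A.
  by rewrite u3 cast_comp cast_refl.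
rewrite -[LHS]c1r -{1}U !cA E1 -(cA mu) -tC c1r E2 tensZr compZr compZl.
rewrite (xchg2 (twist A) eta) cA u3.
by rewrite t1r -cA cast_comp cast_refl c1r.
Qed.
Lemma main_aux (N : Mor A A) :
  delta_separable mu delta ->
  special mu eta delta eps ->
  haploid A ->
  is_nakayama mu eps N ->
  N != id A ->
  mu ◦ ((N ⊗ id A) ◦ delta) = 0.
Proof.
move=> _ [[r0 r0nz Her] _] [h0 h0nz Hh] HN NnI.
have [t Ht] := Defs.end_one HC (twist I).
have id1 := Defs.id_one_neq0 HC.
have t0 : t != 0.
  apply/eqP=> t0; move: Ht; rewrite t0 scale0r => Ht.
  have [ti [ti1 _]] := Defs.twist_iso HC I.
  by move: ti1; rewrite Ht comp0r => E; move: id1; rewrite -E eqxx.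
have HN' := N_eq Ht t0 HN.
rewrite HN' tensZl compZl compZr.
have etanz : eta != 0.
  apply/eqP=> e0; move: Her; rewrite e0 comp0r => /esym/eqP.
  by rewrite scaler_eq0 (negPf r0nz) (negPf id1).
have epsnz : eps != 0.
  apply/eqP=> e0; move: Her; rewrite e0 comp0l => /esym/eqP.
  by rewrite scaler_eq0 (negPf r0nz) (negPf id1).
have [s Hs] := Hh eta.
have s0 : s != 0 by apply/eqP=> s0; move: etanz; rewrite Hs s0 scale0r eqxx.
have E1 := F1. have E4 := F4.
set f := mu ◦ ((twist A ⊗ id A) ◦ delta) in E1 E4 *.
have [r Hr] := Hh (f ◦ eta).
have Heta : f ◦ eta = (r / s) *: eta.
  by rewrite Hr Hs scalerA divfK.
clearbody f.
have Ha := F2abs E1 Heta.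
have Hb := F5abs E4 Heta.
have [c0|cn0] := eqVneq (r / s) 0.
  by rewrite Ha c0 scale0r scaler0.
have th : twist A = id A.
  by apply: (scalerI cn0); rewrite -Hb -Ha.
have t1 : t = 1.
  have := Defs.twist_nat HC eps; rewrite th c1r Ht compZl c1l => /eqP.
  rewrite -subr_eq0 -{2}[eps]scale1r -scalerBl scaler_eq0 (negPf epsnz) orbF subr_eq0.
  by move/eqP.
by move: NnI; rewrite HN' t1 invr1 scale1r th eqxx.
Qed.
End Frob.
End P.

Theorem mainTheorem4 (k : fieldType) (C : ribbon_data k)
    (A : Ob C) (mu : Mor (otens A A) A) (eta : Mor (tunit C) A)
    (delta : Mor A (otens A A)) (eps : Mor A (tunit C)) (N : Mor A A) :
  (2%:R : k) != 0 ->
  ribbon_axioms C ->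
  frobenius_algebra mu eta delta eps ->
  commutative_alg mu ->
  delta_separable mu delta ->
  special mu eta delta eps ->
  haploid A ->
  is_nakayama mu eps N ->
  N != idm A ->
  mu ◦ ((N ⊗ idm A) ◦ delta) = 0.
Proof.
move=> _ HC HF Hcomm.
exact: (@main_aux k C HC A mu eta delta eps HF Hcomm N).
Qed.
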